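(* For each $t\in J$, the map $\Psi_t\colon A\to\hat D_t\setminus\hat I_t$ is a bijection.
   Context: Setup: $I=[-1,1]$, $J=(1,2]$, $f_t(x)=\min(t(x-1)+3,\,t(1-x)-1)$. $S$ is the circle of radius 2 with angular coordinate $y$; $D$ is the disk of radius 2 with coordinates $(y,s)\in S\times[0,1]$ (from a smooth embedding of the mapping cylinder of $y\mapsto\cos y$), $(y,0)=y\in S$, $(y,1)=\cos y\in I\subset D$. $\Upsilon(y,s)=(y,2s)$ for $s\le1/2$, $(y,1)$ for $s\ge1/2$. An unwrapping is a continuous family of orientation-preserving near-homeomorphisms $\bar f_t\colon D\to D$ with $\bar f_t$ injective on $I$, $\bar f_t(I)\subset\{s\ge1/2\}$, $\Upsilon\circ\bar f_t|_I=f_t$, the second coordinate of $\bar f_t(y,s)$ equal to $s$ for $s\le 1/2$; assume moreover $\bar f_t=\mathrm{id}$ on $S\times[0,3/4]$. $H_t=\Upsilon\circ\bar f_t$ (so $H_t|_I=f_t$), $\hat D_t=\varprojlim(D,H_t)=\{\langle z_0,z_1,\dots\rangle: H_t(z_{n+1})=z_n\}$, $\hat I_t=\varprojlim(I,f_t)\subset\hat D_t$. Let $A=S\times[0,\infty)$. Define $\Psi_t\colon A\to\hat D_t\setminus\hat I_t$ by: if $s\in[0,1)$, $\Psi_t(y,s)=\langle(y,s),(y,s/2),(y,s/4),\dots\rangle$; if $s\ge1$, let $k=\lfloor s\rfloor$, $u=s-k$, $v=(u+1)/2\in[1/2,1)$, and $\Psi_t(y,s)=\langle z_0,z_1,\dots\rangle$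 with $z_{k-j}=H_t^{\,j}(y,v)$ for $j=1,\dots,k$ (equivalently $f_t^{j-1}(H_t(y,v))$), $z_k=(y,v)$, and $z_{k+j}=(y,v/2^j)$ for $j\ge1$. *)

(* Defs.v *)
From Stdlib Require Import Reals Lra Lia ClassicalEpsilon.
Open Scope R_scope.

Definition pt := (R * R)%type.

Definition dist2 (p q : pt) : R :=
  sqrt ((fst p - fst q)^2 + (snd p - snd q)^2).

Definition inD (p : pt) : Prop := (fst p)^2 + (snd p)^2 <= 4.

Definition inI (x : R) : Prop := -1 <= x <= 1.
Definition ptI (x : R) : pt := (x, 0).
Definition inIpt (p : pt) : Prop := inI (fst p) /\ snd p = 0.

Definition inJ (t : R) : Prop := 1 < t <= 2.

Definition f (t x : R) : R := Rmin (t * (x - 1) + 3) (t * (1 - x) - 1).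

(* Hypotheses on the coordinate map phi : (y,s) |-> point of D, coming from an
   embedding of the mapping cylinder of y |-> cos y (y = angle on the circle S
   of radius 2, s in [0,1]).  *)
Record coord_system (phi : R -> R -> pt) : Prop := {
  cs_cont : forall y s eps, 0 < eps -> exists delta, 0 < delta /\
      forall y' s', Rabs (y - y') < delta -> Rabs (s - s') < delta ->
        dist2 (phi y s) (phi y' s') < eps;
  cs_per : forall y s, phi (y + 2 * PI) s = phi y s;
  cs_S : forall y, phi y 0 = (2 * cos y, 2 * sin y);
  cs_I : forall y, phi y 1 = ptI (cos y);
  cs_inj : forall y s y' s', 0 <= s <= 1 -> 0 <= s' <= 1 ->
      phi y s = phi y' s' ->
      s = s' /\ (s = 1 \/ exists k : Z, y' = y + 2 * PI * IZR k);
  cs_onto : forall p, inD p <-> exists y s, 0 <= s <= 1 /\ phi y s = p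
}.

Definition coords (phi : R -> R -> pt) (p : pt) : R * R :=
  epsilon (inhabits (0, 0))
    (fun ys => 0 <= snd ys <= 1 /\ phi (fst ys) (snd ys) = p).

Definition Upsilon (phi : R -> R -> pt) (p : pt) : pt :=
  let ys := coords phi p in phi (fst ys) (Rmin (2 * snd ys) 1).

Definition cont_on_D (h : pt -> pt) : Prop :=
  forall p, inD p -> forall eps, 0 < eps -> exists delta, 0 < delta /\
    forall q, inD q -> dist2 p q < delta -> dist2 (h p) (h q) < eps.

Definition homeo_D (h : pt -> pt) : Prop :=
  (forall p, inD p -> inD (h p)) /\ cont_on_D h /\
  exists g : pt -> pt, (forall p, inD p -> inD (g p)) /\ cont_on_D g /\
    (forall p, inD p -> g (h p) = p /\ h (g p) = p).

Definition near_homeo_D (F : pt -> pt) : Prop :=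
  (forall p, inD p -> inD (F p)) /\
  forall eps, 0 < eps -> exists h, homeo_D h /\
    forall p, inD p -> dist2 (F p) (h p) < eps.

Record unwrapping (phi : R -> R -> pt) (fbar : R -> pt -> pt) : Prop := {
  uw_cont : forall t p, inJ t -> inD p -> forall eps, 0 < eps ->
    exists delta, 0 < delta /\ forall t' q, inJ t' -> inD q ->
      Rabs (t - t') < delta -> dist2 p q < delta ->
      dist2 (fbar t p) (fbar t' q) < eps;
  uw_near : forall t, inJ t -> near_homeo_D (fbar t);
  uw_injI : forall t x x', inJ t -> inI x -> inI x' ->
      fbar t (ptI x) = fbar t (ptI x') -> x = x';
  uw_imI : forall t x, inJ t -> inI x ->
      exists y s, 1/2 <= s <= 1 /\ fbar t (ptI x) = phi y s;
  uw_Ups : forall t x, inJ t -> inI x ->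
      Upsilon phi (fbar t (ptI x)) = ptI (f t x);
  uw_level : forall t y s, inJ t -> 0 <= s <= 1/2 ->
      exists y', fbar t (phi y s) = phi y' s;
  uw_id : forall t y s, inJ t -> 0 <= s <= 3/4 ->
      fbar t (phi y s) = phi y s
}.

Definition H (phi : R -> R -> pt) (fbar : R -> pt -> pt) (t : R) (p : pt) : pt :=
  Upsilon phi (fbar t p).

Definition in_Dhat phi fbar t (z : nat -> pt) : Prop :=
  (forall n, inD (z n)) /\ (forall n, H phi fbar t (z (S n)) = z n).

(* hat I_t = inverse limit of (I, f_t), viewed inside hat D_t. *)
Definition in_Ihat (z : nat -> pt) : Prop := forall n, inIpt (z n).

Definition Psi phi fbar t (y s : R) : nat -> pt := fun n =>
  if Rlt_dec s 1 then phi y (s / 2 ^ n)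
  else
    let k := Z.to_nat (Int_part s) in
    let v := (s - INR k + 1) / 2 in
    if Nat.leb n k then Nat.iter (k - n) (H phi fbar t) (phi y v)
    else phi y (v / 2 ^ (n - k)).

Definition inA (y s : R) : Prop := 0 <= y < 2 * PI /\ 0 <= s.

(* Main.v *)
Require Import Defs.
From Stdlib Require Import Reals Lra Lia Psatz ClassicalEpsilon Classical ZArith Rgeom.
Open Scope R_scope.

Lemma dist2_euc p q : dist2 p q = dist_euc (fst p) (snd p) (fst q) (snd q).
Proof. unfold dist2, dist_euc, Rsqr. f_equal. ring. Qed.

Lemma dist2_tri p q r : dist2 p r <= dist2 p q + dist2 q r.
Proof. rewrite !dist2_euc. apply triangle. Qed.

Lemma dist2_sym p q : dist2 p q = dist2 q p.
Proof. unfold dist2. f_equal. ring. Qed.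

Lemma dist2_ge0 p q : 0 <= dist2 p q.
Proof. apply sqrt_pos. Qed.

Lemma dist2_refl p : dist2 p p = 0.
Proof. unfold dist2. replace ((fst p - fst p) ^ 2 + (snd p - snd p) ^ 2) with 0 by ring. apply sqrt_0. Qed.

Lemma dist2_eq0 p q : dist2 p q = 0 -> p = q.
Proof.
  unfold dist2. destruct p as [a b], q as [c d]; simpl. intro H.
  apply sqrt_eq_0 in H; [|pose proof (pow2_ge_0 (a-c)); pose proof (pow2_ge_0 (b-d)); lra].
  pose proof (pow2_ge_0 (a-c)); pose proof (pow2_ge_0 (b-d)).
  assert ((a-c)^2 = 0) by lra. assert ((b-d)^2 = 0) by lra.
  simpl in H2, H3. rewrite Rmult_1_r in H2, H3.
  apply Rmult_integral in H2; apply Rmult_integral in H3.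
  f_equal; lra.
Qed.

Definition seg (A B : pt) (u : R) : pt :=
  ((1 - u) * fst A + u * fst B, (1 - u) * snd A + u * snd B).

Lemma seg_D A B u : inD A -> inD B -> 0 <= u <= 1 -> inD (seg A B u).
Proof.
  destruct A as [a1 a2], B as [b1 b2]; unfold inD, seg; cbn [fst snd]. intros HA HB Hu.
  assert (E : ((1 - u) * a1 + u * b1) ^ 2 + ((1 - u) * a2 + u * b2) ^ 2
     = (1-u) * (a1^2+a2^2) + u * (b1^2+b2^2) - u*(1-u)*((a1-b1)^2+(a2-b2)^2)) by ring.
  rewrite E. assert (0 <= u*(1-u)*((a1-b1)^2+(a2-b2)^2)).
  { apply Rmult_le_pos; [nra| pose proof (pow2_ge_0 (a1-b1)); pose proof (pow2_ge_0 (a2-b2)); lra]. }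
  nra.
Qed.

Lemma seg_dist_B A B u : 0 <= u <= 1 -> dist2 (seg A B u) B <= dist2 A B.
Proof.
  intros Hu. destruct A as [a1 a2], B as [b1 b2]; unfold dist2, seg; cbn [fst snd].
  apply sqrt_le_1_alt.
  assert (E : ((1 - u) * a1 + u * b1 - b1) ^ 2 + ((1 - u) * a2 + u * b2 - b2) ^ 2
     = (1-u)^2 * ((a1 - b1)^2 + (a2-b2)^2)) by ring.
  rewrite E. assert (0 <= (1-u)^2 <= 1) by (simpl; split; nra).
  pose proof (pow2_ge_0 (a1-b1)); pose proof (pow2_ge_0 (a2-b2)); pose proof (pow2_ge_0 (b1-a1)); pose proof (pow2_ge_0 (b2-a2)).
  match goal with |- ?c * ?X <= ?Y => assert (0 <= X) by lra; pattern Y at 2; rewrite <- (Rmult_1_l Y); apply Rmult_le_compat_r; lra end.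
Qed.

Lemma seg_dist_A A B u : 0 <= u <= 1 -> dist2 (seg A B u) A <= dist2 B A.
Proof.
  intros Hu. destruct A as [a1 a2], B as [b1 b2]; unfold dist2, seg; cbn [fst snd].
  apply sqrt_le_1_alt.
  assert (E : ((1 - u) * a1 + u * b1 - a1) ^ 2 + ((1 - u) * a2 + u * b2 - a2) ^ 2
     = u^2 * ((b1 - a1)^2 + (b2-a2)^2)) by ring.
  rewrite E. assert (0 <= u^2 <= 1) by (simpl; split; nra).
  pose proof (pow2_ge_0 (a1-b1)); pose proof (pow2_ge_0 (a2-b2)); pose proof (pow2_ge_0 (b1-a1)); pose proof (pow2_ge_0 (b2-a2)).
  match goal with |- ?c * ?X <= ?Y => assert (0 <= X) by lra; pattern Y at 2; rewrite <- (Rmult_1_l Y); apply Rmult_le_compat_r; lra end.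
Qed.

Lemma seg0 A B : seg A B 0 = A.
Proof. destruct A, B; unfold seg; simpl; f_equal; ring. Qed.
Lemma seg1 A B : seg A B 1 = B.
Proof. destruct A, B; unfold seg; simpl; f_equal; ring. Qed.

Lemma seg_cont A B u eps : 0 < eps -> exists d, 0 < d /\
  forall u', Rabs (u - u') < d -> dist2 (seg A B u) (seg A B u') < eps.
Proof.
  intros He.
  set (M := dist2 A B + 1).
  assert (HM : 0 < M) by (unfold M; pose proof (dist2_ge0 A B); lra).
  exists (eps / M). split. apply Rdiv_lt_0_compat; lra.
  intros u' Hu'.
  assert (E : dist2 (seg A B u) (seg A B u') = Rabs (u - u') * dist2 A B).
  { destruct A as [a1 a2], B as [b1 b2]; unfold dist2, seg; cbn [fst snd].
    rewrite <- (sqrt_Rsqr (Rabs (u - u'))) by apply Rabs_pos.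
    rewrite <- sqrt_mult_alt by (unfold Rsqr; nra).
    f_equal. rewrite <- Rsqr_abs. unfold Rsqr. ring. }
  rewrite E.
  assert (Rabs (u-u') * dist2 A B <= Rabs (u-u') * M).
  { apply Rmult_le_compat_l. apply Rabs_pos. unfold M; lra. }
  assert (Rabs (u-u') * M < eps / M * M) by (apply Rmult_lt_compat_r; lra).
  replace (eps / M * M) with eps in * by (field; lra). lra.
Qed.

Lemma phi_per_nat phi (Hp : coord_system phi) y s (n : nat) :
  phi (y + 2 * PI * INR n) s = phi y s.
Proof.
  induction n. simpl. f_equal; ring.
  rewrite S_INR. replace (y + 2 * PI * (INR n + 1)) with ((y + 2*PI*INR n) + 2 * PI) by ring.
  rewrite (cs_per _ Hp). exact IHn.
Qed.

Lemma phi_per_Z phi (Hp : coord_system phi) y s (k : Z) :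
  phi (y + 2 * PI * IZR k) s = phi y s.
Proof.
  destruct (Z.le_gt_cases 0 k) as [Hk|Hk].
  - rewrite <- (Z2Nat.id k Hk). rewrite <- INR_IZR_INZ. apply phi_per_nat; auto.
  - assert (Hk' : (0 <= - k)%Z) by lia.
    pose proof (phi_per_nat phi Hp (y + 2 * PI * IZR k) s (Z.to_nat (- k))) as E.
    rewrite INR_IZR_INZ, (Z2Nat.id _ Hk'), opp_IZR in E.
    replace (y + 2 * PI * IZR k + 2 * PI * - IZR k) with y in E by ring. auto.
Qed.

Lemma inD_phi phi (Hp : coord_system phi) y s : 0 <= s <= 1 -> inD (phi y s).
Proof. intros Hs. apply (cs_onto _ Hp). exists y, s. auto. Qed.

Lemma coords_spec phi (Hp : coord_system phi) p : inD p ->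
  0 <= snd (coords phi p) <= 1 /\ phi (fst (coords phi p)) (snd (coords phi p)) = p.
Proof.
  intros HD. unfold coords. apply epsilon_spec.
  apply (cs_onto _ Hp) in HD. destruct HD as [y [s [Hs E]]]. exists (y, s); auto.
Qed.

Definition lam phi (p : pt) : R := snd (coords phi p).

Lemma lam_phi phi (Hp : coord_system phi) y s : 0 <= s <= 1 -> lam phi (phi y s) = s.
Proof.
  intros Hs. unfold lam. destruct (coords_spec phi Hp (phi y s) (inD_phi phi Hp y s Hs)) as [H1 H2].
  destruct (cs_inj _ Hp _ _ _ _ H1 Hs H2) as [E _]. auto.
Qed.

Lemma lam_range phi (Hp : coord_system phi) p : inD p -> 0 <= lam phi p <= 1.
Proof. intros HD. apply (coords_spec phi Hp p HD). Qed.

Lemma reduce_angle y : exists k : Z, 0 <= y + 2 * PI * IZR k < 2 * PI.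
Proof.
  pose proof PI_RGT_0 as HPI.
  exists (- Int_part (y / (2 * PI)))%Z.
  destruct (base_Int_part (y / (2*PI))) as [H1 H2].
  rewrite opp_IZR. set (m := IZR (Int_part (y / (2 * PI)))) in *.
  assert (E : y = 2 * PI * (y / (2 * PI))) by (field; lra).
  split.
  - assert (m * (2*PI) <= y / (2 * PI) * (2*PI)) by (apply Rmult_le_compat_r; lra).
    replace (y / (2 * PI) * (2 * PI)) with y in H by (field; lra). nra.
  - assert (y / (2 * PI) * (2*PI) < (m+1) * (2*PI)) by (apply Rmult_lt_compat_r; lra).
    replace (y / (2 * PI) * (2 * PI)) with y in H by (field; lra). nra.
Qed.

Lemma rep_D phi (Hp : coord_system phi) p : inD p ->
  exists a, 0 <= a < 2 * PI /\ phi a (lam phi p) = p.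
Proof.
  intros HD. destruct (coords_spec phi Hp p HD) as [H1 H2].
  destruct (reduce_angle (fst (coords phi p))) as [k Hk].
  exists (fst (coords phi p) + 2 * PI * IZR k). split; auto.
  rewrite (phi_per_Z phi Hp). exact H2.
Qed.

Lemma phi_of_lam phi (Hp : coord_system phi) p : inD p ->
  phi (fst (coords phi p)) (lam phi p) = p.
Proof. intros HD. apply (coords_spec phi Hp p HD). Qed.

Lemma Ups_phi phi (Hp : coord_system phi) y s : 0 <= s <= 1 ->
  Upsilon phi (phi y s) = phi y (Rmin (2 * s) 1).
Proof.
  intros Hs. unfold Upsilon.
  destruct (coords_spec phi Hp (phi y s) (inD_phi phi Hp y s Hs)) as [H1 H2].
  destruct (cs_inj _ Hp _ _ _ _ H1 Hs H2) as [E [E1 | [k Ek]]].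
  - assert (s = 1) by lra. subst s. rewrite E.
    replace (Rmin (2 * 1) 1) with 1 by (unfold Rmin; destruct Rle_dec; lra).
    rewrite E in H2. exact H2.
  - rewrite E. set (c := coords phi (phi y s)) in *. clearbody c.
    rewrite Ek. symmetry. apply phi_per_Z; auto.
Qed.

Lemma Ups_D phi (Hp : coord_system phi) w : inD w -> inD (Upsilon phi w).
Proof.
  intros HD. unfold Upsilon. destruct (coords_spec phi Hp w HD) as [H1 _].
  apply inD_phi; auto. unfold Rmin; destruct Rle_dec; lra.
Qed.

Lemma fbar_D phi fbar (Hf : unwrapping phi fbar) t p : inJ t -> inD p -> inD (fbar t p).
Proof. intros Ht HD. destruct (uw_near _ _ Hf t Ht) as [H _]. auto. Qed.

Lemma H_D phi fbar (Hp : coord_system phi) (Hf : unwrapping phi fbar) t p :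
  inJ t -> inD p -> inD (H phi fbar t p).
Proof. intros Ht HD. unfold H. apply Ups_D; auto. apply (fbar_D phi); auto. Qed.

Lemma H_low phi fbar (Hp : coord_system phi) (Hf : unwrapping phi fbar) t y s :
  inJ t -> 0 <= s <= 1/2 -> H phi fbar t (phi y s) = phi y (2 * s).
Proof.
  intros Ht Hs. unfold H. rewrite (uw_id _ _ Hf t y s) by (auto; lra).
  rewrite Ups_phi by (auto; lra). f_equal. unfold Rmin; destruct Rle_dec; lra.
Qed.

Lemma phi_not_I phi (Hp : coord_system phi) y s : 0 <= s < 1 -> ~ inIpt (phi y s).
Proof.
  intros Hs [HI H0].
  assert (E2 : phi (acos (fst (phi y s))) 1 = phi y s).
  { rewrite (cs_I _ Hp). unfold ptI. rewrite cos_acos by auto.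
    destruct (phi y s) as [a b]; simpl in *; subst; reflexivity. }
  assert (H1 : 0 <= 1 <= 1) by lra. assert (H2 : 0 <= s <= 1) by lra.
  destruct (cs_inj _ Hp _ _ _ _ H1 H2 E2). lra.
Qed.

Lemma phi_I phi (Hp : coord_system phi) y : inIpt (phi y 1).
Proof.
  rewrite (cs_I _ Hp). unfold inIpt, ptI, inI; simpl. split; auto.
  pose proof (COS_bound y). lra.
Qed.

Definition Kof (s : R) : nat := Z.to_nat (Int_part s).
Definition vof (s : R) : R := (s - INR (Kof s) + 1) / 2.
Definition Lof (s : R) : R := if Rlt_dec s 1 then s else vof s * 2 ^ (Kof s).

Lemma Kof_spec s : 1 <= s -> (1 <= Kof s)%nat /\ INR (Kof s) <= s < INR (Kof s) + 1.
Proof.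
  intros Hs. destruct (base_Int_part s) as [H1 H2].
  assert (Hpos : (1 <= Int_part s)%Z).
  { assert (0 < Int_part s)%Z by (apply lt_IZR; simpl; lra). lia. }
  unfold Kof. rewrite INR_IZR_INZ, Z2Nat.id by lia. split; [lia| lra].
Qed.

Lemma vof_range s : 1 <= s -> 1/2 <= vof s < 1.
Proof. intros Hs. destruct (Kof_spec s Hs) as [_ H]. unfold vof. lra. Qed.

Lemma pow2_pos n : 0 < 2 ^ n.
Proof. apply pow_lt; lra. Qed.

Lemma pow2_S n : 2 ^ (S n) = 2 * 2 ^ n.
Proof. reflexivity. Qed.

Lemma pow2_ge1 n : 1 <= 2 ^ n.
Proof. replace 1 with (2 ^ 0) by reflexivity. apply Rle_pow; [lra|lia]. Qed.

Lemma Lof_lt1 s : s < 1 -> Lof s = s.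
Proof. intros H. unfold Lof. destruct Rlt_dec; lra. Qed.

Lemma Lof_ge1 s : 1 <= s -> Lof s = vof s * 2 ^ Kof s /\ 2 ^ Kof s / 2 <= Lof s < 2 ^ Kof s.
Proof.
  intros H. unfold Lof. destruct Rlt_dec; [lra|].
  pose proof (vof_range s H). pose proof (pow2_pos (Kof s)). split; auto.
  split; nra.
Qed.

Lemma Lof_nonneg s : 0 <= s -> 0 <= Lof s.
Proof.
  intros H. destruct (Rlt_dec s 1). rewrite Lof_lt1; auto.
  destruct (Lof_ge1 s ltac:(lra)) as [_ [H1 _]]. pose proof (pow2_pos (Kof s)). lra.
Qed.

Lemma Lof_inj s s' : 0 <= s -> 0 <= s' -> Lof s = Lof s' -> s = s'.
Proof.
  intros Hs Hs' E.
  assert (Hge : forall u, 1 <= u -> 1 <= Lof u).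
  { intros u Hu. destruct (Lof_ge1 u Hu) as [_ [H1 _]]. destruct (Kof_spec u Hu) as [Hk _].
    destruct (Kof u) as [|k]; [lia|]. rewrite pow2_S in H1. pose proof (pow2_ge1 k). lra. }
  destruct (Rlt_dec s 1) as [h|h]; destruct (Rlt_dec s' 1) as [h'|h'].
  - rewrite !Lof_lt1 in E; auto.
  - rewrite Lof_lt1 in E by auto. pose proof (Hge s' ltac:(lra)). lra.
  - rewrite (Lof_lt1 s') in E by auto. pose proof (Hge s ltac:(lra)). lra.
  - destruct (Lof_ge1 s ltac:(lra)) as [E1 [A1 B1]].
    destruct (Lof_ge1 s' ltac:(lra)) as [E2 [A2 B2]].
    assert (Kof s = Kof s').
    { destruct (Nat.lt_total (Kof s) (Kof s')) as [Hl|[Hl|Hl]]; auto.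
      - assert (2 ^ (S (Kof s)) <= 2 ^ Kof s') by (apply Rle_pow; [lra|lia]).
        rewrite pow2_S in H. lra.
      - assert (2 ^ (S (Kof s')) <= 2 ^ Kof s) by (apply Rle_pow; [lra|lia]).
        rewrite pow2_S in H. lra. }
    rewrite E1, E2, H in E. pose proof (pow2_pos (Kof s')).
    assert (vof s = vof s') by (apply Rmult_eq_reg_r with (2 ^ Kof s'); lra).
    unfold vof in H1. rewrite H in H1. lra.
Qed.

Lemma Psi_ge1 phi fbar t y s n : 1 <= s ->
  Psi phi fbar t y s n =
  if Nat.leb n (Kof s) then Nat.iter (Kof s - n) (H phi fbar t) (phi y (vof s))
  else phi y (vof s / 2 ^ (n - Kof s)).
Proof. intros Hs. unfold Psi. destruct Rlt_dec; [lra|]. reflexivity. Qed.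

Lemma Psi_lt1 phi fbar t y s n : s < 1 -> Psi phi fbar t y s n = phi y (s / 2 ^ n).
Proof. intros Hs. unfold Psi. destruct Rlt_dec; [|lra]. reflexivity. Qed.

Definition Kt (s : R) : nat := if Rlt_dec s 1 then 0%nat else Kof s.

Lemma Psi_tail phi fbar t y s n : 0 <= s -> (Kt s < n)%nat ->
  Psi phi fbar t y s n = phi y (Lof s / 2 ^ n) /\ 0 <= Lof s / 2 ^ n <= 1/2.
Proof.
  intros Hs Hn. unfold Kt in Hn. pose proof (pow2_pos n).
  destruct (Rlt_dec s 1) as [h|h].
  - rewrite Psi_lt1, Lof_lt1 by auto. split; auto.
    destruct n as [|n]; [lia|]. rewrite pow2_S. pose proof (pow2_ge1 n).
    split. apply Rmult_le_pos; [lra| left; apply Rinv_0_lt_compat; lra].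
    apply Rmult_le_reg_r with (2 * 2 ^ n); [lra|].
    unfold Rdiv. rewrite Rmult_assoc, Rinv_l by lra. nra.
  - rewrite Psi_ge1 by lra. destruct (Nat.leb_spec n (Kof s)); [lia|].
    destruct (Lof_ge1 s ltac:(lra)) as [E [A B]].
    assert (En : 2 ^ n = 2 ^ (n - Kof s) * 2 ^ Kof s) by (rewrite <- pow_add; f_equal; lia).
    pose proof (pow2_pos (n - Kof s)). pose proof (pow2_pos (Kof s)).
    rewrite E, En. split.
    + f_equal. field. split; lra.
    + replace (vof s * 2 ^ Kof s / (2 ^ (n - Kof s) * 2 ^ Kof s)) with (vof s / 2 ^ (n - Kof s))
        by (field; split; lra).
      pose proof (vof_range s ltac:(lra)).
      destruct (n - Kof s)%nat as [|m] eqn:Em; [lia|]. rewrite pow2_S. pose proof (pow2_ge1 m).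
      split. apply Rmult_le_pos; [lra| left; apply Rinv_0_lt_compat; lra].
      apply Rmult_le_reg_r with (2 * 2 ^ m); [lra|].
      unfold Rdiv. rewrite Rmult_assoc, Rinv_l by lra. nra.
Qed.

Lemma iter_D phi fbar (Hp : coord_system phi) (Hf : unwrapping phi fbar) t m x :
  inJ t -> inD x -> inD (Nat.iter m (H phi fbar t) x).
Proof. intros Ht Hx. induction m; simpl; auto. apply H_D; auto. Qed.

Lemma half_pow_le v m : 0 <= v <= 1 -> 0 <= v / 2 ^ m <= 1.
Proof.
  intros Hv. pose proof (pow2_ge1 m). pose proof (pow2_pos m). split.
  apply Rmult_le_pos; [lra| left; apply Rinv_0_lt_compat; lra].
  apply Rmult_le_reg_r with (2 ^ m); [lra|].
  unfold Rdiv. rewrite Rmult_assoc, Rinv_l by lra. nra.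
Qed.

Lemma Psi_D phi fbar (Hp : coord_system phi) (Hf : unwrapping phi fbar) t y s n :
  inJ t -> 0 <= s -> inD (Psi phi fbar t y s n).
Proof.
  intros Ht Hs. destruct (Rlt_dec s 1) as [h|h].
  - rewrite Psi_lt1 by auto. apply inD_phi; auto. apply half_pow_le; lra.
  - rewrite Psi_ge1 by lra. pose proof (vof_range s ltac:(lra)).
    destruct (Nat.leb n (Kof s)).
    + apply iter_D; auto. apply inD_phi; auto; lra.
    + apply inD_phi; auto. apply half_pow_le; lra.
Qed.

Lemma Psi_step phi fbar (Hp : coord_system phi) (Hf : unwrapping phi fbar) t y s n :
  inJ t -> 0 <= s -> H phi fbar t (Psi phi fbar t y s (S n)) = Psi phi fbar t y s n.
Proof.
  intros Ht Hs. destruct (Rlt_dec s 1) as [h|h].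
  - rewrite !Psi_lt1 by auto. pose proof (pow2_pos n). rewrite pow2_S.
    rewrite H_low; auto.
    + f_equal. field. lra.
    + replace (s / (2 * 2 ^ n)) with ((s / 2 ^ n) / 2) by (field; lra).
      pose proof (half_pow_le s n ltac:(lra)). lra.
  - rewrite !Psi_ge1 by lra. pose proof (vof_range s ltac:(lra)).
    destruct (Nat.leb_spec (S n) (Kof s)); destruct (Nat.leb_spec n (Kof s)); try lia.
    + replace (Kof s - n)%nat with (S (Kof s - S n)) by lia. reflexivity.
    + assert (n = Kof s) by lia. subst n. replace (S (Kof s) - Kof s)%nat with 1%nat by lia.
      replace (Kof s - Kof s)%nat with 0%nat by lia. simpl.
      rewrite H_low by (auto; lra). f_equal. field.
    + replace (S n - Kof s)%nat with (S (n - Kof s)) by lia.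
      pose proof (pow2_pos (n - Kof s)). rewrite pow2_S.
      rewrite H_low; auto.
      * f_equal. field. lra.
      * replace (vof s / (2 * 2 ^ (n - Kof s))) with ((vof s / 2 ^ (n - Kof s)) / 2) by (field; lra).
        pose proof (half_pow_le (vof s) (n - Kof s) ltac:(lra)). lra.
Qed.

Lemma Psi_forward phi fbar (Hp : coord_system phi) (Hf : unwrapping phi fbar) t y s :
  inJ t -> 0 <= s ->
  in_Dhat phi fbar t (Psi phi fbar t y s) /\ ~ in_Ihat (Psi phi fbar t y s).
Proof.
  intros Ht Hs. split; [split|].
  - intro n. apply Psi_D; auto.
  - intro n. apply Psi_step; auto.
  - intros HI. specialize (HI (S (Kt s))).
    destruct (Psi_tail phi fbar t y s (S (Kt s)) Hs ltac:(lia)) as [E R].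
    rewrite E in HI. revert HI. apply phi_not_I; auto. lra.
Qed.

Lemma angle_eq y y' (k : Z) : 0 <= y < 2 * PI -> 0 <= y' < 2 * PI ->
  y' = y + 2 * PI * IZR k -> y = y'.
Proof.
  intros H1 H2 E. pose proof PI_RGT_0.
  assert (IZR k < 1). { apply Rmult_lt_reg_l with (2 * PI); lra. }
  assert (-1 < IZR k). { apply Rmult_lt_reg_l with (2 * PI); lra. }
  apply lt_IZR in H0. apply lt_IZR in H3. assert (k = 0%Z) by lia. subst k.
  simpl in E. lra.
Qed.

Lemma Psi_inj phi fbar (Hp : coord_system phi) t y s y' s' :
  inA y s -> inA y' s' ->
  (forall n, Psi phi fbar t y s n = Psi phi fbar t y' s' n) -> y = y' /\ s = s'.
Proof.
  intros [Hy Hs] [Hy' Hs'] E.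
  set (n := S (Kt s + Kt s')).
  destruct (Psi_tail phi fbar t y s n Hs ltac:(unfold n; lia)) as [E1 R1].
  destruct (Psi_tail phi fbar t y' s' n Hs' ltac:(unfold n; lia)) as [E2 R2].
  specialize (E n). rewrite E1, E2 in E.
  assert (A1 : 0 <= Lof s / 2 ^ n <= 1) by lra. assert (A2 : 0 <= Lof s' / 2 ^ n <= 1) by lra.
  destruct (cs_inj _ Hp _ _ _ _ A1 A2 E) as [Eq [Ee | [k Ek]]]; [lra|].
  split. eapply angle_eq; eauto.
  apply Lof_inj; auto. pose proof (pow2_pos n).
  apply Rmult_eq_reg_r with (/ 2 ^ n). exact Eq. apply Rinv_neq_0_compat. lra.
Qed.

Definition cv (u : nat -> R) (l : R) : Prop :=
  forall eps, 0 < eps -> exists N, forall n, (N <= n)%nat -> Rabs (u n - l) < eps.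

Definition sub (f : nat -> nat) : Prop := forall n, (f n < f (S n))%nat.

Lemma sub_ge f : sub f -> forall n, (n <= f n)%nat.
Proof. intros Hf n. induction n. lia. specialize (Hf n). lia. Qed.

Lemma sub_mono f : sub f -> forall n m, (n <= m)%nat -> (f n <= f m)%nat.
Proof.
  intros Hf n m Hnm. induction Hnm. lia. specialize (Hf m). lia.
Qed.

Lemma sub_comp f g : sub f -> sub g -> sub (fun n => f (g n)).
Proof.
  intros Hf Hg n. specialize (Hg n).
  assert (f (S (g n)) <= f (g (S n)))%nat by (apply sub_mono; auto; lia).
  specialize (Hf (g n)). lia.
Qed.

Lemma cv_sub u l f : cv u l -> sub f -> cv (fun n => u (f n)) l.
Proof.
  intros Hu Hf eps He. destruct (Hu eps He) as [N HN]. exists N. intros n Hn.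
  apply HN. pose proof (sub_ge f Hf n). lia.
Qed.

Lemma small_inv eps : 0 < eps -> exists N : nat, / (INR N + 1) < eps.
Proof.
  intros He. destruct (archimed (/ eps)) as [H1 _].
  assert (0 <= IZR (up (/ eps))). { pose proof (Rinv_0_lt_compat eps He). lra. }
  assert (Hz : (0 <= up (/ eps))%Z) by (apply le_IZR; auto).
  exists (Z.to_nat (up (/ eps))). rewrite INR_IZR_INZ, Z2Nat.id by auto.
  pose proof (Rinv_0_lt_compat eps He).
  apply Rmult_lt_reg_l with (IZR (up (/ eps)) + 1). lra.
  rewrite Rinv_r by lra.
  apply Rmult_lt_reg_r with (/ eps). auto.
  rewrite Rmult_assoc, Rinv_r, Rmult_1_l, Rmult_1_r by lra. lra.
Qed.

Lemma inv_le N n : (N <= n)%nat -> / (INR n + 1) <= / (INR N + 1).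
Proof.
  intros H. apply Rinv_le_contravar. pose proof (pos_INR N); lra.
  apply le_INR in H. lra.
Qed.

Fixpoint subseq (pick : nat -> nat -> nat) (n : nat) : nat :=
  match n with
  | O => pick O O
  | S m => pick (S (subseq pick m)) (S m)
  end.

Lemma extract (u : nat -> R) a b : (forall n, a <= u n <= b) ->
  exists f l, sub f /\ a <= l <= b /\ cv (fun n => u (f n)) l.
Proof.
  intros Hab.
  destruct (Bolzano_Weierstrass u (fun c => a <= c <= b) (compact_P3 a b) Hab) as [l Hl].
  assert (Hex : forall N k, exists p, (N <= p)%nat /\ Rabs (u p - l) < / (INR k + 1)).
  { intros N k.
    assert (Hpos : 0 < / (INR k + 1)) by (apply Rinv_0_lt_compat; pose proof (pos_INR k); lra).
    destruct (Hl (fun x => Rabs (x - l) < / (INR k + 1)) N) as [p [Hp1 Hp2]].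
    - exists (mkposreal _ Hpos). intros y Hy. unfold disc in Hy. simpl in Hy. auto.
    - exists p; auto. }
  set (pick := fun N k => epsilon (inhabits O) (fun p => (N <= p)%nat /\ Rabs (u p - l) < / (INR k + 1))).
  assert (Hpick : forall N k, (N <= pick N k)%nat /\ Rabs (u (pick N k) - l) < / (INR k + 1)).
  { intros N k. unfold pick. apply epsilon_spec. apply Hex. }
  exists (subseq pick), l. split; [|split].
  - intros n. simpl. destruct (Hpick (S (subseq pick n)) (S n)). lia.
  - split.
    + destruct (Rle_dec a l) as [h1|h1]; auto.
      exfalso. assert (Hpos : 0 < a - l) by lra.
      destruct (Hl (fun x => Rabs (x - l) < a - l) O) as [p [_ Hp]].
      { exists (mkposreal _ Hpos). intros y Hy. unfold disc in Hy. simpl in Hy. auto. }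
      specialize (Hab p). apply Rabs_def2 in Hp. lra.
    + destruct (Rle_dec l b) as [h2|h2]; auto.
      exfalso. assert (Hpos : 0 < l - b) by lra.
      destruct (Hl (fun x => Rabs (x - l) < l - b) O) as [p [_ Hp]].
      { exists (mkposreal _ Hpos). intros y Hy. unfold disc in Hy. simpl in Hy. auto. }
      specialize (Hab p). apply Rabs_def2 in Hp. lra.
  - intros eps He. destruct (small_inv eps He) as [N HN]. exists N. intros n Hn.
    assert (Rabs (u (subseq pick n) - l) < / (INR n + 1)).
    { destruct n; simpl. apply Hpick. apply Hpick. }
    pose proof (inv_le N n Hn). lra.
Qed.

Definition ang phi (p : pt) : R :=
  epsilon (inhabits 0) (fun a => 0 <= a < 2 * PI /\ phi a (lam phi p) = p).

Lemma ang_spec phi (Hp : coord_system phi) p : inD p ->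
  0 <= ang phi p < 2 * PI /\ phi (ang phi p) (lam phi p) = p.
Proof. intros HD. unfold ang. apply epsilon_spec. apply rep_D; auto. Qed.

Lemma dist2_zero_of_small p q : (forall eta, 0 < eta -> dist2 p q < eta) -> p = q.
Proof.
  intros H. apply dist2_eq0. pose proof (dist2_ge0 p q).
  destruct (Rle_lt_or_eq_dec _ _ H0) as [h|h]; auto.
  specialize (H _ h). lra.
Qed.

Lemma lam_unif phi (Hp : coord_system phi) eps : 0 < eps -> exists d, 0 < d /\
  forall x u, inD x -> inD u -> dist2 x u < d -> Rabs (lam phi x - lam phi u) < eps.
Proof.
  intros He. apply NNPP; intro Hn.
  assert (Hseq : forall n : nat, exists xu : pt * pt, inD (fst xu) /\ inD (snd xu) /\
     dist2 (fst xu) (snd xu) < / (INR n + 1) /\ eps <= Rabs (lam phi (fst xu) - lam phi (snd xu))).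
  { intro n. apply NNPP; intro Hc. apply Hn. exists (/ (INR n + 1)). split.
    apply Rinv_0_lt_compat; pose proof (pos_INR n); lra.
    intros x u Hx Hu Hd. apply Rnot_le_lt; intro. apply Hc. exists (x, u). simpl; auto. }
  set (F := fun n => epsilon (inhabits ((0,0),(0,0))) (fun xu : pt * pt => inD (fst xu) /\ inD (snd xu) /\
     dist2 (fst xu) (snd xu) < / (INR n + 1) /\ eps <= Rabs (lam phi (fst xu) - lam phi (snd xu)))).
  assert (HF : forall n, inD (fst (F n)) /\ inD (snd (F n)) /\
     dist2 (fst (F n)) (snd (F n)) < / (INR n + 1) /\ eps <= Rabs (lam phi (fst (F n)) - lam phi (snd (F n)))).
  { intro n. unfold F. apply epsilon_spec. apply Hseq. }
  set (x := fun n => fst (F n)). set (u := fun n => snd (F n)).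
  assert (Hx : forall n, inD (x n)) by (intro n; apply HF).
  assert (Hu : forall n, inD (u n)) by (intro n; apply HF).
  set (a := fun n => ang phi (x n)). set (b := fun n => lam phi (x n)).
  set (a' := fun n => ang phi (u n)). set (b' := fun n => lam phi (u n)).
  assert (Ha : forall n, 0 <= a n <= 2 * PI) by (intro n; destruct (ang_spec phi Hp (x n) (Hx n)); unfold a; lra).
  assert (Hb : forall n, 0 <= b n <= 1) by (intro n; apply lam_range; auto).
  assert (Ha' : forall n, 0 <= a' n <= 2 * PI) by (intro n; destruct (ang_spec phi Hp (u n) (Hu n)); unfold a'; lra).
  assert (Hb' : forall n, 0 <= b' n <= 1) by (intro n; apply lam_range; auto).
  destruct (extract a _ _ Ha) as [f1 [A [Hf1 [HA CA]]]].
  destruct (extract (fun n => b (f1 n)) _ _ (fun n => Hb (f1 n))) as [f2 [B [Hf2 [HB CB]]]].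
  destruct (extract (fun n => a' (f1 (f2 n))) _ _ (fun n => Ha' (f1 (f2 n)))) as [f3 [A' [Hf3 [HA' CA']]]].
  destruct (extract (fun n => b' (f1 (f2 (f3 n)))) _ _ (fun n => Hb' (f1 (f2 (f3 n))))) as [f4 [B' [Hf4 [HB' CB']]]].
  set (G := fun n => f1 (f2 (f3 (f4 n)))).
  assert (HG : sub G) by (unfold G; apply sub_comp; [auto| apply sub_comp; [auto| apply sub_comp; auto]]).
  assert (cA : cv (fun n => a (G n)) A).
  { apply (cv_sub (fun n => a (f1 n)) A (fun n => f2 (f3 (f4 n)))); auto. apply sub_comp; [auto| apply sub_comp; auto]. }
  assert (cB : cv (fun n => b (G n)) B).
  { apply (cv_sub (fun n => b (f1 (f2 n))) B (fun n => f3 (f4 n))); auto. apply sub_comp; auto. }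
  assert (cA' : cv (fun n => a' (G n)) A').
  { apply (cv_sub (fun n => a' (f1 (f2 (f3 n)))) A' f4); auto. }
  assert (cB' : cv (fun n => b' (G n)) B') by exact CB'.
  assert (Ex : forall n, phi (a n) (b n) = x n) by (intro n; apply ang_spec; auto).
  assert (Eu : forall n, phi (a' n) (b' n) = u n) by (intro n; apply ang_spec; auto).
  assert (Hd : forall n, dist2 (x (G n)) (u (G n)) < / (INR n + 1)).
  { intro n. pose proof (sub_ge G HG n). pose proof (inv_le _ _ H). destruct (HF (G n)) as [_ [_ [H1 _]]].
    unfold x, u. lra. }
  assert (EQ : phi A B = phi A' B').
  { apply dist2_zero_of_small. intros eta Heta.
    destruct (cs_cont _ Hp A B (eta/3) ltac:(lra)) as [d1 [Hd1 C1]].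
    destruct (cs_cont _ Hp A' B' (eta/3) ltac:(lra)) as [d2 [Hd2 C2]].
    destruct (cA d1 Hd1) as [N1 HN1]. destruct (cB d1 Hd1) as [N2 HN2].
    destruct (cA' d2 Hd2) as [N3 HN3]. destruct (cB' d2 Hd2) as [N4 HN4].
    destruct (small_inv (eta/3) ltac:(lra)) as [N5 HN5].
    set (n := (N1 + N2 + N3 + N4 + N5)%nat).
    specialize (HN1 n ltac:(unfold n; lia)). specialize (HN2 n ltac:(unfold n; lia)).
    specialize (HN3 n ltac:(unfold n; lia)). specialize (HN4 n ltac:(unfold n; lia)).
    pose proof (inv_le N5 n ltac:(unfold n; lia)).
    specialize (C1 (a (G n)) (b (G n))). specialize (C2 (a' (G n)) (b' (G n))).
    rewrite Ex in C1. rewrite Eu in C2.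
    assert (dist2 (phi A B) (x (G n)) < eta / 3) by (apply C1; rewrite Rabs_minus_sym; auto).
    assert (dist2 (phi A' B') (u (G n)) < eta / 3) by (apply C2; rewrite Rabs_minus_sym; auto).
    pose proof (Hd n).
    pose proof (dist2_tri (phi A B) (x (G n)) (phi A' B')).
    pose proof (dist2_tri (x (G n)) (u (G n)) (phi A' B')).
    rewrite (dist2_sym (u (G n))) in H4. lra. }
  destruct (cs_inj _ Hp _ _ _ _ HB HB' EQ) as [EB _]. subst B'.
  destruct (cB (eps/2) ltac:(lra)) as [N1 HN1]. destruct (cB' (eps/2) ltac:(lra)) as [N2 HN2].
  specialize (HN1 (N1 + N2)%nat ltac:(lia)). specialize (HN2 (N1 + N2)%nat ltac:(lia)).
  destruct (HF (G (N1 + N2)%nat)) as [_ [_ [_ H4]]].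
  set (k := G (N1 + N2)%nat) in *.
  apply Rabs_def2 in HN1. apply Rabs_def2 in HN2.
  assert (Rabs (b k - b' k) < eps) by (apply Rabs_def1; lra).
  unfold b, b', x, u in H. lra.
Qed.

Lemma cont_of (f : R -> R) :
  (forall x eps, 0 < eps -> exists d, 0 < d /\ forall x', Rabs (x' - x) < d -> Rabs (f x' - f x) < eps) ->
  continuity f.
Proof.
  intros H x. unfold continuity_pt, continue_in, limit1_in, limit_in. intros eps He.
  destruct (H x eps He) as [d [Hd Hx]]. exists d. split; auto.
  intros x' [_ Hx']. simpl in *. unfold Rdist in *. apply Hx; auto.
Qed.

Definition clamp a b (t : R) : R := Rmax a (Rmin t b).

Lemma clamp_range a b t : a <= b -> a <= clamp a b t <= b.
Proof. intros. unfold clamp, Rmax, Rmin. repeat destruct Rle_dec; lra. Qed.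

Lemma clamp_id a b t : a <= t <= b -> clamp a b t = t.
Proof. intros. unfold clamp, Rmax, Rmin. repeat destruct Rle_dec; lra. Qed.

Lemma clamp_lip a b t t' : a <= b -> Rabs (clamp a b t - clamp a b t') <= Rabs (t - t').
Proof.
  intros. unfold clamp, Rmax, Rmin. repeat destruct Rle_dec; unfold Rabs; repeat destruct Rcase_abs; lra.
Qed.

Lemma comp_cont phi (Hp : coord_system phi) (g : pt -> pt) (Hg : cont_on_D g)
  (HgD : forall p, inD p -> inD (g p)) (P : R -> pt) (HP : forall t, inD (P t))
  (HPc : forall t eps, 0 < eps -> exists d, 0 < d /\ forall t', Rabs (t' - t) < d -> dist2 (P t) (P t') < eps)
  (c : R) : continuity (fun t => lam phi (g (P t)) - c).
Proof.
  apply cont_of. intros t eps He.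
  destruct (lam_unif phi Hp eps He) as [d1 [Hd1 H1]].
  destruct (Hg (P t) (HP t) d1 Hd1) as [d2 [Hd2 H2]].
  destruct (HPc t d2 Hd2) as [d3 [Hd3 H3]].
  exists d3. split; auto. intros t' Ht'.
  replace (lam phi (g (P t')) - c - (lam phi (g (P t)) - c)) with (lam phi (g (P t')) - lam phi (g (P t))) by ring.
  apply H1; auto. rewrite dist2_sym. apply H2; auto.
Qed.

Lemma seg_path_cont A B t eps : 0 < eps -> exists d, 0 < d /\
  forall t', Rabs (t' - t) < d -> dist2 (seg A B (clamp 0 1 t)) (seg A B (clamp 0 1 t')) < eps.
Proof.
  intros He. destruct (seg_cont A B (clamp 0 1 t) eps He) as [d [Hd H]].
  exists d. split; auto. intros t' Ht'. apply H.
  pose proof (clamp_lip 0 1 t t' ltac:(lra)). rewrite Rabs_minus_sym in Ht'. lra.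
Qed.

Lemma rad_path_cont phi (Hp : coord_system phi) y s1 t eps : 0 <= s1 -> 0 < eps -> exists d, 0 < d /\
  forall t', Rabs (t' - t) < d -> dist2 (phi y (clamp 0 s1 t)) (phi y (clamp 0 s1 t')) < eps.
Proof.
  intros Hs He. destruct (cs_cont _ Hp y (clamp 0 s1 t) eps He) as [d [Hd H]].
  exists d. split; auto. intros t' Ht'. apply H.
  replace (y - y) with 0 by ring. rewrite Rabs_R0. auto.
  pose proof (clamp_lip 0 s1 t t' Hs). rewrite Rabs_minus_sym in Ht'. lra.
Qed.

Lemma fix_low phi fbar (Hp : coord_system phi) (Hf : unwrapping phi fbar) t u :
  inJ t -> inD u -> lam phi u <= 3/4 -> fbar t u = u.
Proof.
  intros Ht HD Hl. pose proof (phi_of_lam phi Hp u HD) as E.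
  pose proof (lam_range phi Hp u HD).
  rewrite <- E at 1. rewrite (uw_id _ _ Hf) by (auto; lra). exact E.
Qed.

Lemma key phi fbar (Hp : coord_system phi) (Hf : unwrapping phi fbar) t q :
  inJ t -> inD q -> lam phi (fbar t q) < 1/2 -> lam phi q <= 3/4.
Proof.
  intros Ht HqD Hw. apply Rnot_lt_le; intro Hq.
  set (w := fbar t q) in *.
  assert (HwD : inD w) by (apply (fbar_D phi); auto).
  set (sw := lam phi w) in *. set (yw := fst (coords phi w)).
  assert (Ew : phi yw sw = w) by (apply phi_of_lam; auto).
  assert (Hsw : 0 <= sw <= 1) by (apply lam_range; auto).
  set (s0 := phi yw 0).
  assert (Hs0D : inD s0) by (apply inD_phi; auto; lra).
  assert (Ls0 : lam phi s0 = 0) by (apply lam_phi; auto; lra).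
  assert (Fs0 : fbar t s0 = s0) by (apply (fix_low phi); auto; lra).
  destruct (lam_unif phi Hp (1/8) ltac:(lra)) as [d [Hd Hu]].
  destruct (uw_near _ _ Hf t Ht) as [_ Hn].
  destruct (Hn (d/2) ltac:(lra)) as [h [[HhD [_ [g [HgD [Hgc Hgh]]]]] Hclose]].
  assert (Cross : forall x r, inD x -> inD r -> lam phi (g x) = 5/8 -> dist2 x r < d/2 ->
            lam phi r < 1/2 -> False).
  { intros x r Hx Hr Hgx Hxr Hlr.
    assert (Fu : fbar t (g x) = g x) by (apply (fix_low phi); auto; lra).
    assert (Hhg : h (g x) = x) by (apply Hgh; auto).
    specialize (Hclose (g x) (HgD x Hx)). rewrite Fu, Hhg in Hclose.
    pose proof (dist2_tri (g x) x r).
    specialize (Hu (g x) r (HgD x Hx) Hr ltac:(lra)). rewrite Hgx in Hu.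
    apply Rabs_def2 in Hu. lra. }
  assert (Ghq : g (h q) = q) by (apply Hgh; auto).
  assert (Ghs0 : g (h s0) = s0) by (apply Hgh; auto).
  assert (Dq : dist2 w (h q) < d/2) by (apply Hclose; auto).
  assert (Ds0 : dist2 s0 (h s0) < d/2) by (rewrite <- Fs0 at 1; apply Hclose; auto).
  destruct (Rle_lt_dec (lam phi (g w)) (5/8)) as [C1|C1].
  - set (P := fun tau => seg (h q) w (clamp 0 1 tau)).
    assert (HP : forall tau, inD (P tau)) by (intro; apply seg_D; auto; apply clamp_range; lra).
    destruct (IVT_cor (fun tau => lam phi (g (P tau)) - 5/8) 0 1) as [tau [Ht1 Ht2]].
    + apply (comp_cont phi Hp g Hgc HgD P HP). intros. apply seg_path_cont; auto.
    + lra.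
    + unfold P. rewrite (clamp_id 0 1 0), (clamp_id 0 1 1) by lra. rewrite seg0, seg1, Ghq. nra.
    + apply (Cross (P tau) w); auto. lra.
      unfold P. eapply Rle_lt_trans. apply seg_dist_B. apply clamp_range; lra.
      rewrite dist2_sym. auto.
  - destruct (Rle_lt_dec (lam phi (g s0)) (5/8)) as [C2|C2].
    + set (P := fun tau => phi yw (clamp 0 sw tau)).
      assert (HP : forall tau, inD (P tau)) by (intro; apply inD_phi; auto;
          pose proof (clamp_range 0 sw tau ltac:(lra)); lra).
      destruct (IVT_cor (fun tau => lam phi (g (P tau)) - 5/8) 0 sw) as [tau [Ht1 Ht2]].
      * apply (comp_cont phi Hp g Hgc HgD P HP). intros. apply rad_path_cont; auto; lra.
      * lra.
      * unfold P. rewrite (clamp_id 0 sw 0), (clamp_id 0 sw sw) by lra. fold s0. rewrite Ew. nra.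
      * apply (Cross (P tau) (P tau)); auto. lra. rewrite dist2_refl. lra.
        unfold P. rewrite lam_phi; auto. pose proof (clamp_range 0 sw tau ltac:(lra)). lra.
        pose proof (clamp_range 0 sw tau ltac:(lra)). lra.
    + set (P := fun tau => seg s0 (h s0) (clamp 0 1 tau)).
      assert (HP : forall tau, inD (P tau)) by (intro; apply seg_D; auto; apply clamp_range; lra).
      destruct (IVT_cor (fun tau => lam phi (g (P tau)) - 5/8) 0 1) as [tau [Ht1 Ht2]].
      * apply (comp_cont phi Hp g Hgc HgD P HP). intros. apply seg_path_cont; auto.
      * lra.
      * unfold P. rewrite (clamp_id 0 1 0), (clamp_id 0 1 1) by lra. rewrite seg0, seg1, Ghs0, Ls0. nra.
      * apply (Cross (P tau) s0); auto. lra.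
        unfold P. eapply Rle_lt_trans. apply seg_dist_A. apply clamp_range; lra.
        rewrite dist2_sym. auto. lra.
Qed.

Lemma step phi fbar (Hp : coord_system phi) (Hf : unwrapping phi fbar) t q :
  inJ t -> inD q -> lam phi (H phi fbar t q) < 1 ->
  lam phi q < 1/2 /\ H phi fbar t q = phi (fst (coords phi q)) (2 * lam phi q).
Proof.
  intros Ht HqD Hl.
  assert (HwD : inD (fbar t q)) by (apply (fbar_D phi); auto).
  assert (EH : forall p, H phi fbar t p = phi (fst (coords phi (fbar t p))) (Rmin (2 * lam phi (fbar t p)) 1))
    by (intros; reflexivity).
  pose proof (lam_range phi Hp _ HwD).
  assert (Hw : lam phi (fbar t q) < 1/2).
  { destruct (Rlt_dec (lam phi (fbar t q)) (1/2)) as [h|h]; auto. exfalso.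
    rewrite EH in Hl. replace (Rmin (2 * lam phi (fbar t q)) 1) with 1 in Hl
      by (unfold Rmin; destruct Rle_dec; lra).
    rewrite lam_phi in Hl; auto; lra. }
  pose proof (key phi fbar Hp Hf t q Ht HqD Hw) as Hk.
  assert (Fq : fbar t q = q) by (apply (fix_low phi); auto).
  rewrite Fq in Hw. split; auto.
  rewrite EH, Fq. f_equal. pose proof (lam_range phi Hp _ HqD).
  unfold Rmin; destruct Rle_dec; lra.
Qed.

Lemma agree_down phi fbar t (z w : nat -> pt) K :
  (forall n, H phi fbar t (z (S n)) = z n) -> (forall n, H phi fbar t (w (S n)) = w n) ->
  (forall n, (K < n)%nat -> z n = w n) -> forall n, z n = w n.
Proof.
  intros Hz Hw Hk.
  assert (HA : forall m n, (K < n + m)%nat -> z n = w n).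
  { induction m; intros n Hn. apply Hk; lia.
    rewrite <- Hz, <- Hw. f_equal. apply IHm. lia. }
  intro n. apply (HA (S K) n). lia.
Qed.

Lemma pow2_ge_INR n : INR n <= 2 ^ n.
Proof.
  induction n. simpl; lra. rewrite S_INR, pow2_S. pose proof (pow2_ge1 n). lra.
Qed.

Lemma least_pow L : forall n, L < 2 ^ n -> exists k, L < 2 ^ k /\ (k = O \/ 2 ^ k / 2 <= L).
Proof.
  induction n; intros Hn. exists O; auto.
  destruct (Rlt_dec L (2 ^ n)) as [h|h]. apply IHn; auto.
  exists (S n). split; auto. right. rewrite pow2_S. lra.
Qed.

Lemma exist_s L : 0 <= L -> exists s, 0 <= s /\ Lof s = L.
Proof.
  intros HL. destruct (Rlt_dec L 1) as [h|h].
  - exists L. split; auto. apply Lof_lt1; auto.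
  - destruct (archimed L) as [H1 _].
    assert (Hz : (0 <= up L)%Z) by (apply le_IZR; simpl; lra).
    assert (HN : L < 2 ^ Z.to_nat (up L)).
    { pose proof (pow2_ge_INR (Z.to_nat (up L))). rewrite INR_IZR_INZ, Z2Nat.id in H by auto. lra. }
    destruct (least_pow L _ HN) as [k [Hk1 [Hk2|Hk2]]].
    + subst k. simpl in Hk1. lra.
    + pose proof (pow2_pos k).
      set (v := L / 2 ^ k).
      assert (Hv : 1/2 <= v < 1).
      { unfold v. split.
        apply Rmult_le_reg_r with (2 ^ k); auto. replace (L / 2 ^ k * 2 ^ k) with L by (field; lra). lra.
        apply Rmult_lt_reg_r with (2 ^ k); auto. replace (L / 2 ^ k * 2 ^ k) with L by (field; lra). lra. }
      assert (Hk0 : k <> O). { intro. subst k. simpl in Hk2. lra. }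
      pose proof (pos_INR k). assert (1 <= INR k) by (apply (le_INR 1); lia).
      set (s := INR k + 2 * v - 1).
      exists s. split. unfold s; lra.
      assert (Ks : Kof s = k).
      { unfold Kof. rewrite <- (Int_part_spec s (Z.of_nat k)). apply Nat2Z.id.
        rewrite <- INR_IZR_INZ. unfold s. lra. }
      unfold Lof. destruct Rlt_dec as [h'|h']. unfold s in h'; lra.
      unfold vof. rewrite Ks. unfold s.
      replace ((INR k + 2 * v - 1 - INR k + 1) / 2) with v by field.
      unfold v. field. lra.
Qed.

Lemma surj phi fbar (Hp : coord_system phi) (Hf : unwrapping phi fbar) t z :
  inJ t -> in_Dhat phi fbar t z -> ~ in_Ihat z ->
  exists y s, inA y s /\ forall n, Psi phi fbar t y s n = z n.
Proof.
  intros Ht [HzD Hzs] HI.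
  destruct (not_all_ex_not _ _ HI) as [N HN].
  assert (HN1 : lam phi (z N) < 1).
  { destruct (Rlt_dec (lam phi (z N)) 1) as [h|h]; auto. exfalso. apply HN.
    pose proof (lam_range phi Hp _ (HzD N)). rewrite <- (phi_of_lam phi Hp _ (HzD N)).
    replace (lam phi (z N)) with 1 by lra. apply phi_I; auto. }
  set (Y := fun n => fst (coords phi (z n))).
  assert (Low : forall m, lam phi (z (N + m)%nat) < 1).
  { induction m. rewrite Nat.add_0_r; auto.
    rewrite Nat.add_succ_r. rewrite <- Hzs in IHm.
    destruct (step phi fbar Hp Hf t _ Ht (HzD _) IHm). lra. }
  assert (StepN : forall m, lam phi (z (S (N + m))) < 1/2 /\
        z (N + m)%nat = phi (Y (S (N + m))) (2 * lam phi (z (S (N + m))))).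
  { intro m. pose proof (Low m) as L. rewrite <- Hzs in L.
    destruct (step phi fbar Hp Hf t _ Ht (HzD _) L) as [A B]. split; auto.
    rewrite <- Hzs. exact B. }
  set (Y0 := Y N). set (c0 := lam phi (z N)).
  assert (Hc0 : 0 <= c0 <= 1) by (apply lam_range; auto).
  assert (Ang : forall m, z (N + m)%nat = phi Y0 (lam phi (z (N + m)%nat))).
  { induction m. rewrite Nat.add_0_r. symmetry. apply phi_of_lam; auto.
    destruct (StepN m) as [S1 S2].
    pose proof (lam_range phi Hp _ (HzD (S (N + m)))) as R1.
    pose proof (lam_range phi Hp _ (HzD (N + m)%nat)) as R2.
    pose proof (Low m) as L.
    rewrite IHm in S2.
    assert (A1 : 0 <= 2 * lam phi (z (S (N + m))) <= 1) by lra.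
    destruct (cs_inj _ Hp _ _ _ _ R2 A1 S2) as [_ [Ee | [k Ek]]]; [lra|].
    rewrite Nat.add_succ_r. rewrite <- (phi_of_lam phi Hp _ (HzD (S (N + m)))) at 1.
    fold (Y (S (N + m))). rewrite Ek. apply phi_per_Z; auto. }
  assert (Lam : forall m, lam phi (z (N + m)%nat) = c0 / 2 ^ m).
  { induction m. rewrite Nat.add_0_r. simpl. unfold c0. field.
    destruct (StepN m) as [S1 S2].
    assert (lam phi (z (N + m)%nat) = 2 * lam phi (z (S (N + m)))).
    { rewrite S2 at 1. apply lam_phi; auto. pose proof (lam_range phi Hp _ (HzD (S (N + m)))). lra. }
    rewrite Nat.add_succ_r. rewrite IHm in H. rewrite pow2_S. pose proof (pow2_pos m).
    apply Rmult_eq_reg_l with 2; [|lra]. rewrite <- H. field. lra. }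
  destruct (reduce_angle Y0) as [k Hk]. set (Y1 := Y0 + 2 * PI * IZR k).
  set (L := c0 * 2 ^ N).
  assert (HL : 0 <= L) by (unfold L; pose proof (pow2_pos N); nra).
  assert (Big : forall n, (N <= n)%nat -> z n = phi Y1 (L / 2 ^ n)).
  { intros n Hn. replace n with (N + (n - N))%nat by lia.
    rewrite Ang, Lam. unfold Y1. rewrite phi_per_Z by auto. f_equal.
    unfold L. rewrite pow_add. pose proof (pow2_pos N). pose proof (pow2_pos (n - N)). field. lra. }
  destruct (exist_s L HL) as [s [Hs Es]].
  exists Y1, s. split. split; auto.
  assert (Tail : forall n, (Kt s < n)%nat -> z n = phi Y1 (L / 2 ^ n)).
  { assert (forall m n, (Kt s < n)%nat -> (N <= n + m)%nat -> z n = phi Y1 (L / 2 ^ n)).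
    { induction m; intros n Hn Hnm. apply Big; lia.
      destruct (le_lt_dec N n). apply Big; auto.
      rewrite <- Hzs. rewrite (IHm (S n)) by lia.
      destruct (Psi_tail phi fbar t Y1 s (S n) Hs ltac:(lia)) as [_ R]. rewrite Es in R.
      rewrite H_low; auto. f_equal. rewrite pow2_S. pose proof (pow2_pos n). field. lra. }
    intros n Hn. apply (H (N + 0)%nat n Hn). lia. }
  intro n. symmetry. revert n.
  apply (agree_down phi fbar t z (Psi phi fbar t Y1 s) (Kt s)); auto.
  - intro n. apply Psi_step; auto.
  - intros n Hn. rewrite Tail by auto. destruct (Psi_tail phi fbar t Y1 s n Hs Hn) as [E _].
    rewrite E, Es. auto.
Qed.

Theorem mainTheorem6 (phi : R -> R -> pt) (fbar : R -> pt -> pt)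
  (Hphi : coord_system phi) (Hfbar : unwrapping phi fbar)
  (t : R) (Ht : inJ t) :
  (forall y s, inA y s ->
     in_Dhat phi fbar t (Psi phi fbar t y s) /\ ~ in_Ihat (Psi phi fbar t y s)) /\
  (forall y s y' s', inA y s -> inA y' s' ->
     (forall n, Psi phi fbar t y s n = Psi phi fbar t y' s' n) ->
     y = y' /\ s = s') /\
  (forall z, in_Dhat phi fbar t z -> ~ in_Ihat z ->
     exists y s, inA y s /\ forall n, Psi phi fbar t y s n = z n).
Proof.
  split; [|split].
  - intros y s [_ Hs]. apply Psi_forward; auto.
  - intros y s y' s' HA HA' E. apply (Psi_inj phi fbar Hphi t); auto.
  - intros z Hz HI. apply (surj phi fbar Hphi Hfbar t); auto.
Qed.
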